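(* Let $n\ge 1$ and $j$ be integers with $0\le j\le n-1$. Then \[ \sum_{k=j}^{n}(-1)^{k-j}{n\brace k}{k\brack j}H_k=\left(\binom{n}{j}-1\right)\frac{B_{n-j}}{n-j}. \]
   Context: $B_m$ denotes the $m$th Bernoulli number, defined by $\frac{t}{e^t-1}=\sum_{m\ge0}B_m\frac{t^m}{m!}$ (so $B_0=1$, $B_1=-1/2$). ${k\brack j}$ denotes the (unsigned) Stirling number of the first kind, defined by $x(x+1)\cdots(x+k-1)=\sum_{j=0}^k{k\brack j}x^j$, and ${n\brace k}$ the Stirling number of the second kind, defined by $x^n=\sum_{k=0}^n(-1)^{n-k}{n\brace k}x(x+1)\cdots(x+k-1)$. $H_k=1+\frac12+\cdots+\frac1k$ is the $k$th harmonic number, $H_0=0$. *)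

(* Defs.v *)
From mathcomp Require Import all_boot all_order all_algebra.
Set Implicit Arguments. Unset Strict Implicit. Unset Printing Implicit Defensive.
Import Order.TTheory GRing.Theory Num.Theory.
Local Open Scope ring_scope.

(* Unsigned Stirling numbers of the first kind [k brack j]:
   x(x+1)...(x+k-1) = sum_j [k brack j] x^j, equivalently
   [k+1 brack j+1] = k [k brack j+1] + [k brack j], [0 brack 0] = 1. *)
Fixpoint stirling1 (k j : nat) : nat :=
  match k, j with
  | 0, 0 => 1
  | 0, _.+1 => 0
  | k'.+1, 0 => 0
  | k'.+1, j'.+1 => k' * stirling1 k' j'.+1 + stirling1 k' j'
  end%N.

Fixpoint stirling2 (n k : nat) : nat :=
  match n, k with
  | 0, 0 => 1
  | 0, _.+1 => 0
  | n'.+1, 0 => 0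
  | n'.+1, k'.+1 => k'.+1 * stirling2 n' k'.+1 + stirling2 n' k'
  end%N.

(* Bernoulli numbers with B_1 = -1/2, via
   sum_{k=0}^{m} C(m+1,k) B_k = [m = 0]. *)
Fixpoint bernoulli_seq (m : nat) : seq rat :=
  match m with
  | 0 => [:: 1]
  | m'.+1 =>
      let s := bernoulli_seq m' in
      rcons s (- (\sum_(k < m'.+1) ('C(m'.+2, k))%:R * nth 0 s k) / (m'.+2)%:R)
  end.

Definition bernoulli (m : nat) : rat := nth 0 (bernoulli_seq m) m.

Definition harmonic (k : nat) : rat := \sum_(1 <= i < k.+1) (i%:R)^-1.

(* Main.v *)
Require Import Defs.
From mathcomp Require Import all_boot all_order all_algebra ring lra zify.
Import Order.TTheory GRing.Theory Num.Theory.
Local Open Scope ring_scope.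

Lemma st1_gt k j : (k < j)%N -> stirling1 k j = 0%N.
Proof.
elim: k j => [|k IH] [|j] //= H.
by rewrite IH ?IH //; lia.
Qed.

Lemma st2_gt n k : (n < k)%N -> stirling2 n k = 0%N.
Proof.
elim: n k => [|n IH] [|k] //= H.
by rewrite !IH //; lia.
Qed.

Lemma st1_k0 k : (k * stirling1 k 0 = 0)%N.
Proof. by case: k => [|k] //=; rewrite muln0. Qed.

Definition ff k : {poly rat} := \prod_(i < k) ('X - (i%:R)%:P).

Lemma ffS k : ff k.+1 = ff k * ('X - (k%:R)%:P).
Proof. by rewrite /ff big_ord_recr. Qed.

Lemma coef_ff k j : (ff k)`_j = (-1)^+(k-j) * (stirling1 k j)%:R.
Proof.
elim: k j => [|k IH] j.
  rewrite /ff big_ord0 coef1; case: j => [|j] //=; by rewrite mulr0.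
rewrite ffS mulrBr coefB coefMX coefMC IH.
case: j => [|j] /=.
  by rewrite IH subn0 -mulrA -natrM mulnC st1_k0 !mulr0 oppr0.
rewrite IH subSS.
have [hj|hj] := leqP (j.+1) k.
  have -> : (k - j = (k - j.+1).+1)%N by lia.
  rewrite exprS natrD mulrDr; ring.
by rewrite (st1_gt _ _ hj) muln0 add0n mulr0 mul0r subr0.
Qed.

Lemma XffS k : 'X * ff k = ff k.+1 + k%:R *: ff k.
Proof. by rewrite ffS mulrBr -mul_polyC (mulrC 'X) [_%:P * _]mulrC addrNK. Qed.

Definition Pw (w : nat -> rat) n :=
  \sum_(k < n.+1) ((stirling2 n k)%:R * w k) *: ff k.

Lemma Pw_step w n : Pw w n.+1 = 'X * Pw w n +
  \sum_(k < n.+1) ((stirling2 n k)%:R * (w k.+1 - w k)) *: ff k.+1.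
Proof.
rewrite /Pw big_ord_recl /= mul0r scale0r add0r mulr_sumr.
have E1 : \sum_(i < n.+1) 'X * (((stirling2 n i)%:R * w i) *: ff i) =
   \sum_(i < n.+1) ((stirling2 n i)%:R * w i) *: ff i.+1 +
   \sum_(i < n.+1) ((stirling2 n i)%:R * w i * i%:R) *: ff i.
  rewrite -big_split /=; apply: eq_bigr => i _.
  by rewrite -scalerAr XffS scalerDr scalerA.
have E2 : \sum_(i < n.+1) ((stirling2 n i)%:R * w i * i%:R) *: ff i =
   \sum_(i < n.+1) ((stirling2 n i.+1)%:R * w i.+1 * i.+1%:R) *: ff i.+1.
  rewrite big_ord_recl /= mulr0 scale0r add0r big_ord_recr /=.
  by rewrite st2_gt // mul0r mul0r scale0r addr0.
rewrite E1 E2 -addrA addrC -addrA -big_split /= -big_split /=.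
apply: eq_bigr => i _.
rewrite /bump /= -scalerDl -scalerDl; congr (_ *: _).
rewrite natrD natrM; ring.
Qed.

Lemma Xn_Pw n : 'X^n = Pw (fun _ => 1) n.
Proof.
elim: n => [|n IH].
  by rewrite /Pw big_ord1 /= mulr1 scale1r /ff big_ord0 expr0.
rewrite Pw_step exprS IH.
rewrite big1 ?addr0 // => i _; by rewrite subrr mulr0 scale0r.
Qed.

Lemma ff_horner k x : (ff k).[x] = \prod_(i < k) (x - i%:R).
Proof. rewrite /ff horner_prod; apply: eq_bigr => i _; exact: hornerXsubC. Qed.

Lemma ff_diff k x : (ff k.+1).[x + 1] - (ff k.+1).[x] = k.+1%:R * (ff k).[x].
Proof.
rewrite !ff_horner big_ord_recl big_ord_recr /=.
have -> : \prod_(i < k) (x + 1 - (bump 0 i)%:R) = \prod_(i < k) (x - i%:R).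
  apply: eq_bigr => i _; rewrite /bump /= natrD; ring.
rewrite subr0; ring.
Qed.

Definition Q n : {poly rat} :=
  \sum_(k < n.+1) ((stirling2 n k)%:R * (k.+1%:R)^-1) *: ff k.+1.

Lemma Q_diff n x : (Q n).[x + 1] - (Q n).[x] = x ^+ n.
Proof.
have := congr1 (fun p => p.[x]) (Xn_Pw n); rewrite /= hornerXn => ->.
rewrite /Q /Pw !horner_sum -sumrB; apply: eq_bigr => i _.
rewrite !hornerZ -mulrBr ff_diff mulr1.
have h : (i.+1%:R : rat) != 0 by rewrite pnatr_eq0.
by rewrite mulrA divfK.
Qed.

Lemma Q0 n : (Q n).[0] = 0.
Proof.
rewrite /Q horner_sum big1 // => i _.
by rewrite hornerZ ff_horner big_ord_recl /= subrr mul0r mulr0.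
Qed.

Lemma size_bseq m : size (bernoulli_seq m) = m.+1.
Proof. by elim: m => [|m IH] //=; rewrite size_rcons IH. Qed.

Lemma nth_bseq_add m d i : (i <= m)%N ->
  nth 0 (bernoulli_seq (m + d)) i = nth 0 (bernoulli_seq m) i.
Proof.
move=> him; elim: d => [|d IH]; first by rewrite addn0.
rewrite addnS /= nth_rcons size_bseq.
by have -> : (i < (m + d).+1)%N by lia.
Qed.

Lemma nth_bseq m i : (i <= m)%N -> nth 0 (bernoulli_seq m) i = bernoulli i.
Proof.
move=> him; rewrite /bernoulli.
have -> : m = (i + (m - i))%N by lia.
by rewrite nth_bseq_add.
Qed.

Lemma bern_rec m :
  \sum_(i < m.+1) ('C(m.+1, i))%:R * bernoulli i = (m == 0%N)%:R.
Proof.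
case: m => [|m].
  by rewrite big_ord1 /= /bernoulli /= mul1r.
rewrite big_ord_recr /= binSn.
have -> : bernoulli m.+1 = - (\sum_(k < m.+1) ('C(m.+2, k))%:R *
      nth 0 (bernoulli_seq m) k) / (m.+2)%:R.
  by rewrite /bernoulli /= nth_rcons size_bseq ltnn eqxx.
have -> : \sum_(k < m.+1) ('C(m.+2, k))%:R * nth 0 (bernoulli_seq m) k =
          \sum_(k < m.+1) ('C(m.+2, k))%:R * bernoulli k.
  by apply: eq_bigr => k _; rewrite nth_bseq // -ltnS.
have h : ((m.+2)%:R : rat) != 0 by rewrite pnatr_eq0.
rewrite mulrC divfK // subrr //.
Qed.

Lemma binom_swap n i a : (i + a <= n)%N ->
  ('C(n, i) * 'C(n - i, a) = 'C(n, a) * 'C(n - a, i))%N.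
Proof.
move=> h.
have h1 := @bin_fact n i ltac:(lia).
have h3 := @bin_fact n a ltac:(lia).
have h2 := @bin_fact (n - i) a ltac:(lia).
have h4 := @bin_fact (n - a) i ltac:(lia).
have e : (n - i - a = n - a - i)%N by lia.
rewrite e in h2.
have K : (0 < i`! * a`! * (n - a - i)`!)%N by rewrite !muln_gt0 !fact_gt0.
apply/eqP; rewrite -(eqn_pmul2r K); apply/eqP.
move: h1 h2 h3 h4.
set A := 'C(n, i); set B := 'C(n - i, a); set C := 'C(n, a); set D := 'C(n - a, i).
set fi := i`!; set fa := a`!; set f3 := (n - a - i)`!; set fn := n`!.
set fni := (n - i)`!; set fna := (n - a)`!.
move=> h1 h2 h3 h4.
clearbody A B C D fi fa f3 fn fni fna.
transitivity (A * (fi * (B * (fa * f3))))%N; first by ring.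
rewrite h2 h1 -h3 -h4; ring.
Qed.

Definition R n : {poly rat} := \poly_(l < n.+2)
  (if l is l'.+1 then ('C(n.+1, l))%:R * bernoulli (n - l') / (n.+1)%:R else 0).

Lemma R_horner n x : (R n).[x] =
  \sum_(i < n.+1) ('C(n.+1, i))%:R * bernoulli i / (n.+1)%:R * x ^+ (n.+1 - i).
Proof.
rewrite /R horner_poly big_ord_recl /= mul0r add0r.
rewrite (reindex_inj (@rev_ord_inj _)) /=.
apply: eq_bigr => -[i hi] _ /=.
rewrite /bump /= add1n.
have -> : ((n.+1 - i.+1).+1 = n.+1 - i)%N by lia.
have -> : (n - (n.+1 - i.+1) = i)%N by lia.
by rewrite bin_sub // ltnW.
Qed.

Lemma pow_diff p (x : rat) : (x + 1) ^+ p - x ^+ p = \sum_(a < p) x ^+ a *+ 'C(p, a).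
Proof. by rewrite exprD1n big_ord_recr /= binn mulr1n addrK. Qed.

Lemma aux1 (A B b d y : rat) : A * b / d * (y * B) = A * B * b / d * y.
Proof. ring. Qed.
Lemma aux2 (A B C D b d y : rat) : A * B = C * D -> A * B * b / d * y = C / d * y * (D * b).
Proof. move=> h; transitivity ((A * B) * b / d * y); first ring. rewrite h; ring. Qed.

Lemma R_diff n x : (R n).[x + 1] - (R n).[x] = x ^+ n.
Proof.
rewrite !R_horner -sumrB.
pose c i := ('C(n.+1, i))%:R * bernoulli i / (n.+1)%:R.
transitivity (\sum_(i < n.+1) \sum_(a < n.+1)
   (if (a < n.+1 - i)%N then c i * (x ^+ a *+ 'C(n.+1 - i, a)) else 0)).
  apply: eq_bigr => i _.
  rewrite -mulrBr pow_diff mulr_sumr (big_ord_widen (n.+1) (fun a => c i * (x ^+ a *+ 'C(n.+1 - i, a)))) ?leq_subr //.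
  by rewrite big_mkcond.
rewrite exchange_big /=.
transitivity (\sum_(a < n.+1) ('C(n.+1, a))%:R / (n.+1)%:R * x ^+ a *
     ((n - a)%N == 0%N)%:R).
  apply: eq_bigr => a _; case: a => a ha /=.
  have -> : ((n - a)%N == 0%N)%:R = \sum_(i < (n - a).+1) ('C((n - a).+1, i))%:R * bernoulli i :> rat.
    by rewrite bern_rec.
  rewrite mulr_sumr.
  have e : ((n - a).+1 = n.+1 - a)%N by lia.
  rewrite e (big_ord_widen (n.+1) (fun i => ('C(n.+1, a))%:R / (n.+1)%:R * x ^+ a *
     (('C(n.+1 - a, i))%:R * bernoulli i))) ?leq_subr // [in RHS]big_mkcond /=.
  apply: eq_bigr => i _; case: i => i hi /=.
  have -> : (a < n.+1 - i)%N = (i < n.+1 - a)%N by apply/idP/idP; lia.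
  case: ifP => // hia.
  rewrite /c -[x ^+ a *+ _]mulr_natr; clear c.
  have hs := @binom_swap n.+1 i a ltac:(lia).
  have : (('C(n.+1, i) * 'C(n.+1 - i, a))%:R = ('C(n.+1, a) * 'C(n.+1 - a, i))%:R :> rat)
    by rewrite hs.
  rewrite !natrM => hs'.
  by rewrite aux1 (aux2 _ _ _ _ _ _ _ hs').
rewrite big_ord_recr /= big1 ?add0r.
  by rewrite subnn eqxx mulr1 binSn divff ?mul1r // pnatr_eq0.
move=> -[a ha] _ /=.
have /negPf -> : (n - a)%N != 0%N by lia.
by rewrite mulr0.
Qed.

Lemma diff_zero (D : {poly rat}) :
  D.[0] = 0 -> (forall x, D.[x + 1] = D.[x]) -> D = 0.
Proof.
move=> h0 hd.
have Hm : forall m : nat, D.[m%:R] = 0.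
  by elim=> [|m IH] //; rewrite -addn1 natrD hd.
apply/eqP; apply: contraT => nz.
have := @max_poly_roots _ D [seq (i%:R : rat) | i <- iota 0 (size D)] nz.
rewrite size_map size_iota ltnn; apply.
  by apply/allP => y /mapP [i _ ->]; rewrite /root Hm.
rewrite map_inj_uniq ?iota_uniq //.
by move=> a b /eqP; rewrite eqr_nat => /eqP.
Qed.

Lemma Q_R n : Q n = R n.
Proof.
apply/eqP; rewrite -subr_eq0; apply/eqP; apply: diff_zero.
  by rewrite hornerD hornerN Q0 horner_coef0 /R coef_poly /= subr0.
move=> x; rewrite !hornerD !hornerN.
have h1 := Q_diff n x; have h2 := R_diff n x.
apply/eqP; rewrite -subr_eq0; apply/eqP.
rewrite -[RHS](subrr (x ^+ n)); rewrite -{1}h1 -h2; ring.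
Qed.

Lemma harmS k : harmonic k.+1 = harmonic k + (k.+1%:R)^-1.
Proof. by rewrite /harmonic big_nat_recr. Qed.

Definition P n := Pw harmonic n.

Lemma P_step n : P n.+1 = 'X * P n + R n.
Proof.
rewrite /P Pw_step -Q_R /Q; congr (_ + _); apply: eq_bigr => i _.
by rewrite harmS addrC addKr.
Qed.

Lemma aux3 (d a u b : rat) : d != 0 -> d + a != 0 ->
  (a * u / (d + a) - 1) * b / d + u * b / (d + a) = (u - 1) * b / d.
Proof. by move=> hd hn; field; rewrite hd hn. Qed.

Lemma coef_P n j : (P n)`_j = if (j < n)%N then
   ('C(n, j)%:R - 1) * bernoulli (n - j) / (n - j)%:R
   else if j == n then harmonic n else 0.
Proof.
elim: n j => [|n IH] j.
  rewrite /P /Pw big_ord1 /harmonic big_geq // mulr0 scale0r coef0.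
  by case: j.
rewrite P_step coefD coefXM /R coef_poly.
case: j => [|j] /=.
  by rewrite add0r bin0 subrr !mul0r.
rewrite IH.
have [hj|hj] := ltnP j n.
  rewrite !ltnS (ltnW hj) hj subSS.
  have hb := mul_bin_diag n.+1 j; rewrite /= in hb.
  have hb' : (n.+1%:R * ('C(n, j))%:R = j.+1%:R * ('C(n.+1, j.+1))%:R :> rat)
    by rewrite -!natrM hb.
  have hd : ((n - j)%:R : rat) != 0 by rewrite pnatr_eq0 subn_eq0 -ltnNge.
  have hn : (n.+1%:R : rat) != 0 by rewrite pnatr_eq0.
  have hC : ('C(n, j))%:R = j.+1%:R * ('C(n.+1, j.+1))%:R / n.+1%:R :> rat.
    by rewrite -hb' mulrC mulrA mulVf ?mul1r.
  have hnj : (n.+1%:R : rat) = (n - j)%:R + j.+1%:R.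
    by rewrite -natrD; congr (_%:R); lia.
  rewrite hC; move: hd hn; rewrite hnj.
  move: ((n - j)%:R : rat) (j.+1%:R : rat) (('C(n.+1, j.+1))%:R : rat) (bernoulli (n - j)) => d a u b hd hn.
  exact: aux3.
rewrite !ltnS [(j < n)%N]ltnNge hj /= eqSS.
case: eqP => [->|] //=.
  rewrite leqnn subnn binn /bernoulli /= mul1r harmS. by [].
move=> hne; have -> : (j <= n)%N = false by apply/negbTE; rewrite -ltnNge; lia.
by rewrite addr0.
Qed.

Theorem mainTheorem1 (n j : nat) (hn : (1 <= n)%N) (hj : (j <= n - 1)%N) :
  \sum_(j <= k < n.+1)
     (-1) ^+ (k - j) * (stirling2 n k)%:R * (stirling1 k j)%:R * harmonic k
  = (('C(n, j))%:R - 1) * bernoulli (n - j) / (n - j)%:R :> rat.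
Proof.
have hjn : (j < n)%N by lia.
have := coef_P n j; rewrite hjn => <-.
rewrite /P /Pw coef_sum.
rewrite -(big_mkord xpredT (fun k => ((stirling2 n k)%:R * harmonic k *: ff k)`_j)).
rewrite [RHS](big_cat_nat _ (n := j)) //=; last by lia.
have -> : \sum_(0 <= i < j) (((stirling2 n i)%:R * harmonic i) *: ff i)`_j = 0.
  rewrite big_nat big1 // => k hk.
  rewrite coefZ coef_ff st1_gt ?mulr0 //; by case/andP: hk.
rewrite add0r; apply: eq_big_nat => k _.
rewrite coefZ coef_ff; ring.
Qed.
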